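(* Let $\ell\le d\le n/2$ and suppose $d$ is unknown to the algorithm. Any adaptive randomized group testing algorithm that, with probability at least $2/3$, detects $\ell$ defective items must make (in the worst case) at least $\ell\log(n/d)-1$ tests when the defective set has size $d$.
   Context: Group testing: items $X=[n]$, unknown defective set $I\subseteq X$ with $d=|I|$. A test $Q\subseteq X$ has answer $1$ if $Q\cap I\neq\emptyset$ and $0$ otherwise; the algorithm accesses $I$ only through tests, and in an adaptive algorithm tests may depend on previous answers. ''Detects $\ell$ defective items'' means it outputs $L\subseteq I$ with $|L|=\ell$. ''$d$ is unknown'' means the algorithm receives no information about $|I|$ and must succeed for every defective set $I$ with $|I|\ge \ell$. Logarithms are base 2. *)

(* Defs.v *)
From mathcomp Require Import all_boot all_order all_algebra.
From mathcomp Require Import all_classical all_reals all_analysis.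
Set Implicit Arguments. Unset Strict Implicit. Unset Printing Implicit Defensive.
Import Order.TTheory GRing.Theory Num.Theory.
Local Open Scope ring_scope.
Local Open Scope classical_set_scope.

(* A deterministic adaptive group-testing algorithm on the items 'I_n is a
   (finite) decision tree: either it stops and outputs a set L, or it asks the
   test Q and continues with [t0] if the answer is 0 (Q :&: I = set0) and with
   [t1] if the answer is 1. *)
Inductive gtree (n : nat) : Type :=
  | GLeaf of {set 'I_n}
  | GTest of {set 'I_n} & gtree n & gtree n.

Definition test_answer n (Q I : {set 'I_n}) : bool := Q :&: I != finset.set0.

Fixpoint gout n (t : gtree n) (I : {set 'I_n}) : {set 'I_n} :=
  match t with
  | GLeaf L => L
  | GTest Q t0 t1 => if test_answer Q I then gout t1 I else gout t0 I
  end.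

Fixpoint gtests n (t : gtree n) (I : {set 'I_n}) : nat :=
  match t with
  | GLeaf _ => 0
  | GTest Q t0 t1 => (if test_answer Q I then gtests t1 I else gtests t0 I).+1
  end.

Definition detects n (ell : nat) (t : gtree n) (I : {set 'I_n}) : bool :=
  (gout t I \subset I) && (#|gout t I| == ell).

(* A randomized adaptive algorithm: a discrete probability distribution over
   deterministic decision trees, presented as weights [p k] on a countable
   index set nat together with the tree [alg k] chosen with weight [p k].
   (Every randomized algorithm induces such a distribution, since the set of
   decision trees is countable.) *)
Definition is_distribution {R : realType} (p : nat -> R) : Prop :=
  (forall k, 0 <= p k) /\ (\esum_(k in [set: nat]) (p k)%:E = 1%E).

Definition success_prob {R : realType} n (ell : nat) (p : nat -> R)
  (alg : nat -> gtree n) (I : {set 'I_n}) : \bar R :=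
  \esum_(k in [set k | detects ell (alg k) I]) (p k)%:E.

Definition log2 {R : realType} (x : R) : R := ln x / ln 2.

(* Main.v *)
Require Import Defs.
From mathcomp Require Import all_boot all_order all_algebra.
From mathcomp Require Import all_classical all_reals all_analysis.
From mathcomp Require Import ssrbool eqtype fintype finset.
From mathcomp Require Import zify lra.
Import Order.TTheory GRing.Theory Num.Theory.

Lemma ffact_ineq {n d l} : l <= d -> d <= n -> n ^ l * d ^_ l <= d ^ l * n ^_ l.
Proof.
move=> ld dn; elim: l ld => [|l IH] ld; first by rewrite !expn0 !ffactn0.
have IH' := IH (ltnW ld).
rewrite !expnSr !ffactnSr.
have h : n * (d - l) <= d * (n - l) by nia.
have := leq_mul IH' h.
nia.
Qed.

Lemma bin_ffact_id n d l : l <= d -> d <= n ->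
  'C(n, d) * d ^_ l = n ^_ l * 'C(n - l, d - l).
Proof.
move=> ld dn.
have p : 0 < (d - l)`! * (n - d)`! by rewrite muln_gt0 !fact_gt0.
apply/eqP; rewrite -(eqn_pmul2r p); apply/eqP.
have e1 : (n - l) - (d - l) = n - d by lia.
have b1 := bin_fact dn.
have b2 : 'C(n - l, d - l) * ((d - l)`! * (n - d)`!) = (n - l)`!.
  by rewrite -e1 bin_fact //; lia.
have f1 : d ^_ l * (d - l)`! = d`! by rewrite ffact_fact.
have f2 : n ^_ l * (n - l)`! = n`! by rewrite ffact_fact //; lia.
by rewrite -[n ^_ l * _ * _]mulnA b2 f2 -b1 -f1 !mulnA.
Qed.

Lemma ratio {n d l} : l <= d -> d <= n ->
  n ^ l * 'C(n - l, d - l) <= d ^ l * 'C(n, d).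
Proof.
move=> ld dn.
have p : 0 < d ^_ l by rewrite ffact_gt0.
rewrite -(leq_pmul2r p) -[d ^ l * _ * _]mulnA bin_ffact_id //.
have := ffact_ineq ld dn.
move=> H; apply: (leq_trans _ (_ : d ^ l * n ^_ l * 'C(n - l, d - l) <= _)).
  by rewrite [n ^ l * _ * _]mulnAC leq_mul2r H orbT.
by rewrite mulnA.
Qed.
Lemma leaf_count {n} (L : {set 'I_n}) d :
  #|[set I : {set 'I_n} | (L \subset I) && (#|I| == d)]| <= 'C(n - #|L|, d - #|L|).
Proof.
set F := [set I : {set 'I_n} | _].
have inj : {in F &, injective (fun I => I :\: L)}.
  move=> I J; rewrite !inE => /andP[LI _] /andP[LJ _] e.
  apply/setP => x; have := congr1 (fun X : {set 'I_n} => x \in X) e => /=; rewrite !inE.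
  case xL: (x \in L) => /=; last by [].
  by rewrite (subsetP LI _ xL) (subsetP LJ _ xL).
rewrite -(card_in_imset inj).
have e1 : #|~: L| = n - #|L|.
  by rewrite -[X in X - _](card_ord n) -(cardsC L) addKn.
rewrite -e1.
rewrite -cards_draws; apply: subset_leq_card; apply/subsetP => B /imsetP[I IF ->]; move: IF.
rewrite /F !inE => /andP[LI /eqP cI]; apply/andP; split.
  by apply/subsetP => x; rewrite !inE => /andP[].
by rewrite cardsDS // cI.
Qed.

Lemma tree_bound n ell d (t : gtree n) (h : nat) (S : {set {set 'I_n}}) :
 (forall I, I \in S -> #|I| = d /\ (gtests t I <= h)%N) ->
 #|[set I in S | detects ell t I]| <= 2 ^ h * 'C(n - ell, d - ell).
Proof.
elim: t h S => [L|Q t0 IH0 t1 IH1] h S HS.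
  rewrite /detects /=.
  have [cL|cL] := eqVneq #|L| ell; last first.
    by rewrite (_ : [set _ in _ | _] = set0) ?cards0 //; apply/setP => I; rewrite !inE !andbF.
  have p2 : 0 < 2 ^ h by rewrite expn_gt0.
  apply: (leq_trans _ (leq_pmull _ p2)).
  rewrite -cL; apply: (leq_trans _ (leaf_count L d)); apply: subset_leq_card.
  apply/subsetP => I; rewrite !inE => /andP[IS /andP[-> _]] /=.
  by rewrite (HS I IS).1.
case: h HS => [|h] HS.
  rewrite (_ : [set _ in _ | _] = set0) ?cards0 //; apply/setP => I; rewrite !inE.
  by apply/negP => /andP[/HS[_]].
set S0 := [set I in S | ~~ test_answer Q I].
set S1 := [set I in S | test_answer Q I].
have H0 : forall I, I \in S0 -> #|I| = d /\ (gtests t0 I <= h)%N.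
  move=> I; rewrite inE => /andP[/HS [c g] a]; split => //.
  by move: g; rewrite /= (negPf a).
have H1 : forall I, I \in S1 -> #|I| = d /\ (gtests t1 I <= h)%N.
  move=> I; rewrite inE => /andP[/HS [c g] a]; split => //.
  by move: g; rewrite /= a.
rewrite expnS mul2n -addnn mulnDl -(cardsID [set I | test_answer Q I]).
apply: leq_add.
  apply: (leq_trans _ (IH1 _ _ H1)); apply: subset_leq_card; apply/subsetP => I.
  by rewrite !inE /detects /=; case: (test_answer Q I); rewrite /= ?andbF ?andbT ?andbA.
apply: (leq_trans _ (IH0 _ _ H0)); apply: subset_leq_card; apply/subsetP => I.
by rewrite !inE /detects /=; case: (test_answer Q I); rewrite /= ?andbF ?andbT ?andbA.
Qed.

Local Open Scope ring_scope.

Theorem theorem6 (R : realType) (n ell d : nat) (p : nat -> R)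
    (alg : nat -> gtree n) :
  (ell <= d)%N -> (2 * d <= n)%N ->
  is_distribution p ->
  (* d unknown: success w.p. >= 2/3 for every defective set of size >= ell *)
  (forall I : {set 'I_n}, (ell <= #|I|)%N ->
      ((2%:R / 3%:R : R)%:E <= success_prob ell p alg I)%E) ->
  (* worst case over defective sets of size d and over the randomness *)
  exists I : {set 'I_n}, #|I| = d /\
    exists k, 0 < p k /\
      ell%:R * log2 (R := R) (n%:R / d%:R) - 1 <= (gtests (alg k) I)%:R.
Proof.
move=> le_ld le_dn [p0 p1] Hsucc.
have dn : (d <= n)%N by lia.
set S := [set I : {set 'I_n} | #|I| == d].
have cardS : #|S| = 'C(n, d) by rewrite card_draws card_ord.
have S0 : (0 < #|S|)%N by rewrite cardS bin_gt0.
pose c k := #|[set I in S | detects ell (alg k) I]|.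
have step1 : exists k, 0 < p k /\ (2 * #|S| <= 3 * c k)%N.
  case: (pselect (exists k, 0 < p k /\ (2 * #|S| <= 3 * c k)%N)) => // nH.
  exfalso.
  have H k : 0 < p k -> (3 * c k < 2 * #|S|)%N.
    by move=> pk; rewrite ltnNge; apply/negP => h; apply: nH; exists k.
  set N := #|S|.
  have succE I : success_prob ell p alg I =
      \esum_(k in [set: nat]) ((if detects ell (alg k) I then p k else 0)%:E).
    rewrite /success_prob esum_mkcond; apply: eq_esum => k _.
    case: (boolP (detects ell (alg k) I)) => h.
      by rewrite mem_set.
    rewrite ifF //; apply/negbTE/negP => /set_mem /=; exact/negP.
  have lower : ((2 / 3 * N%:R)%:E <= \sum_(I in S) success_prob ell p alg I)%E.
    apply: (@le_trans _ _ (\sum_(I in S) (2%:R/3%:R : R)%:E)%E).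
      by rewrite sumEFin sumr_const lee_fin -/N [in leLHS]mulr_natr.
    by apply: lee_sum => I; rewrite inE => /eqP cI; apply: Hsucc; rewrite cI.
  have Npos : 1 <= N%:R :> R by rewrite ler1n.
  have upper : (\sum_(I in S) success_prob ell p alg I <= ((2 * N%:R - 1) / 3)%:E)%E.
    under eq_bigr do rewrite succE.
    rewrite -esum_sum; last by move=> k I _ _; rewrite lee_fin; case: ifP.
    apply: (@le_trans _ _ (\esum_(k in [set: nat]) (((2 * N%:R - 1) / 3) * p k)%:E)%E).
      apply: le_esum => k _.
      rewrite sumEFin lee_fin -big_mkcondr /=.
      rewrite (eq_bigl (fun I => I \in [set I in S | detects ell (alg k) I])); last first.
        by move=> I; rewrite inE.
      rewrite sumr_const.
      have [pk0|pkn0] := eqVneq (p k) 0; first by rewrite pk0 mulr0 mul0rn.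
      have pk : 0 < p k by rewrite lt0r pkn0 p0.
      have := H k pk => hk.
      have : (3 * c k + 1 <= 2 * N)%N by lia.
      rewrite -(ler_nat R) natrD !natrM => hR.
      rewrite -[p k *+ _]mulr_natr -/(c k); nra.
    have x0 : 0 <= (2 * N%:R - 1) / 3 :> R by lra.
    rewrite (eq_esum (fun k _ => EFinM _ _)) -nneseries_esumT; last first.
      by move=> i; rewrite -EFinM lee_fin mulr_ge0.
    rewrite nneseriesZl; last by move=> i _; rewrite lee_fin.
    by rewrite nneseries_esumT ?p1 ?mule1 // => i; rewrite lee_fin.
  have := le_trans lower upper; rewrite lee_fin; lra.
case: step1 => k [pk hc].
have [I0 I0S hmax] := eq_bigmax_cond (fun I => gtests (alg k) I) S0.
set h := gtests (alg k) I0.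
have tb : (c k <= 2 ^ h * 'C(n - ell, d - ell))%N.
  apply: tree_bound => I IS; split; first by move: IS; rewrite inE => /eqP.
  by rewrite /h -hmax; exact: leq_bigmax_cond.
exists I0; split; first by move: I0S; rewrite inE => /eqP.
exists k; split => //.
have [->|lpos] := posnP ell.
  by rewrite mul0r sub0r; have := ler0n R h; lra.
have dpos : (0 < d)%N by lia.
have Mpos : (0 < 'C(n - ell, d - ell))%N by rewrite bin_gt0; lia.
have r := ratio le_ld dn.
have key : (n ^ ell <= d ^ ell * 2 ^ h.+1)%N.
  move: r tb hc Mpos; rewrite -cardS expnS.
  set a := (n ^ ell)%N; set b := (d ^ ell)%N; set e := (2 ^ h)%N; set M := 'C(_, _).
  set N := #|S|; set cc := c k => r tb hc Mpos.
  have h1 : (2 * (a * M) <= 3 * (b * (e * M)))%N.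
    have t1 := leq_mul (leqnn 2) r.
    have t2 := leq_mul (leqnn b) hc.
    have t3 := leq_mul (leqnn b) (leq_mul (leqnn 3) tb).
    apply: (leq_trans t1); rewrite mulnCA; apply: (leq_trans t2).
    by apply: (leq_trans t3); rewrite mulnCA.
  rewrite -(leq_pmul2r Mpos) -(leq_pmul2l (ltn0Sn 1)); apply: (leq_trans h1).
  rewrite -!mulnA mulnCA !mulnA leq_mul2r; apply/orP; right.
  rewrite [(2 * b)%N]mulnC -!mulnA leq_mul2l; apply/orP; right.
  by rewrite mulnA; apply: leq_mul.
have l2 : 0 < ln (2:R) by apply: ln_gt0; rewrite ltr1n.
have ndpos : 0 < n%:R / d%:R :> R by rewrite divr_gt0 // ltr0n; lia.
have L1 : ln (n%:R / d%:R : R) *+ ell <= ln 2 *+ h.+1.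
  rewrite -!lnXn // ler_ln ?posrE ?exprn_gt0 //.
  rewrite expr_div_n ler_pdivrMr ?exprn_gt0 ?ltr0n //.
  by rewrite -!natrX -natrM ler_nat mulnC.
rewrite -[ln _ *+ ell]mulr_natl -[ln 2 *+ _]mulr_natl in L1.
have : ell%:R * ln (n%:R / d%:R : R) / ln 2 <= h.+1%:R by rewrite ler_pdivrMr.
rewrite /log2 mulrA -addn1 natrD; lra.
Qed.
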